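(* Let $G\subsetneq\mathbb{R}^n$ be a domain. For all $z_1,z_2\in G$ and all $p>r\ge1$, \[ b_{G,r}(z_1,z_2)\le b_{G,p}(z_1,z_2)\le 2^{\frac1r-\frac1p}\,b_{G,r}(z_1,z_2). \] In particular, for $p\ge1$, $s_G(z_1,z_2)\le b_{G,p}(z_1,z_2)\le 2^{1-1/p}s_G(z_1,z_2)$. Moreover, if $n=2$, then for every $p\ge1$, \[ \sup\{b_{G,p}(z_1,z_2):z_1,z_2\in G\}=2^{1-1/p}. \]
   Context: For a domain $G\subsetneq\mathbb{R}^n$, $p\ge1$ and $z_1,z_2\in G$, $b_{G,p}(z_1,z_2)=\sup_{z\in\partial G}\frac{|z_1-z_2|}{\sqrt[p]{|z_1-z|^p+|z-z_2|^p}}$, and $s_G=b_{G,1}$, i.e. $s_G(z_1,z_2)=\sup_{z\in\partial G}\frac{|z_1-z_2|}{|z_1-z|+|z-z_2|}$. *)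

(* Defs.v *)
(* Points of R^n are row vectors 'rV[R]_n, with the
   (product = Euclidean) topology of MathComp-Analysis; distances are Euclidean. *)
From HB Require Import structures.
From mathcomp Require Import all_boot all_order all_algebra.
From mathcomp Require Import all_classical all_reals all_analysis.
Set Implicit Arguments. Unset Strict Implicit. Unset Printing Implicit Defensive.
Import Order.TTheory GRing.Theory Num.Theory numFieldNormedType.Exports.
Local Open Scope classical_set_scope.
Local Open Scope ring_scope.

Definition edist (R : realType) (n : nat) (x y : 'rV[R]_n) : R :=
  Num.sqrt (\sum_(i < n) (x ord0 i - y ord0 i) ^+ 2).

Definition bdry (R : realType) (n : nat) (A : set 'rV[R]_n) : set 'rV[R]_n :=
  closure A `\` interior A.

Definition proper_domain (R : realType) (n : nat) (G : set 'rV[R]_n) : Prop :=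
  [/\ G !=set0, open G, connected G & G != setT].

Definition bGp (R : realType) (n : nat) (G : set 'rV[R]_n) (p : R)
    (z1 z2 : 'rV[R]_n) : R :=
  sup [set edist z1 z2 /
          powR (powR (edist z1 z) p + powR (edist z z2) p) p^-1
      | z in bdry G].

Definition sG (R : realType) (n : nat) (G : set 'rV[R]_n) (z1 z2 : 'rV[R]_n) : R :=
  sup [set edist z1 z2 / (edist z1 z + edist z z2) | z in bdry G].

(* Main.v *)
Require Import Defs.
From HB Require Import structures.
From mathcomp Require Import all_boot all_order all_algebra.
From mathcomp Require Import all_classical all_reals all_analysis.
From mathcomp Require Import ring lra.
Require Import Defs.
Import Order.TTheory GRing.Theory Num.Theory numFieldNormedType.Exports.
Local Open Scope classical_set_scope.
Local Open Scope ring_scope.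



HB.lock Definition Mq {R : realType} (p a b : R) : R := powR (powR a p + powR b p) p^-1.

Section PM.
Variable R : realType.
Implicit Types a b r p d : R.

Lemma powR_invK {X r : R} : 0 <= X -> r != 0 -> powR (powR X r^-1) r = X.
Proof. by move=> X0 r0; rewrite -powRrM mulVf // powRr1. Qed.

Lemma powR_Kinv {X r : R} : 0 <= X -> r != 0 -> powR (powR X r) r^-1 = X.
Proof. by move=> X0 r0; rewrite -powRrM mulfV // powRr1. Qed.

Lemma powR_le_inv {x y r : R} : 0 <= x -> 0 <= y -> 0 < r -> powR x r <= powR y r -> x <= y.
Proof.
move=> x0 y0 r0 h; rewrite leNgt; apply/negP => yx.
have := gt0_ltr_powR r0 (y:=x) (x:=y); rewrite !nnegrE => /(_ y0 x0 yx).
by rewrite ltNge h.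
Qed.

Lemma Mq_mono {a b r p} : 0 <= a -> 0 <= b -> 0 < r -> r <= p -> Mq p a b <= Mq r a b.
Proof.
move=> a0 b0 r0 rp; have p0 : 0 < p by apply: lt_le_trans rp.
set s := Mq r a b.
have s0 : 0 <= s by rewrite /s Mq.unlock; exact: powR_ge0.
have sr : powR s r = powR a r + powR b r.
  by rewrite /s Mq.unlock powR_invK ?addr_ge0 ?powR_ge0 // gt_eqF.
have le_s x : 0 <= x -> powR x r <= powR s r -> x <= s.
  by move=> x0 h; apply: (powR_le_inv x0 s0 r0 h).
have as_ : a <= s by apply: le_s => //; rewrite sr lerDl powR_ge0.
have bs : b <= s by apply: le_s => //; rewrite sr lerDr powR_ge0.
have split x : powR x p = powR x r * powR x (p - r).
  rewrite -powRD; first by rewrite addrC subrK.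
  by rewrite addrC subrK gt_eqF.
have hp : powR a p + powR b p <= powR s p.
  rewrite (split a) (split b) (split s) sr mulrDl.
  apply: lerD; apply: ler_wpM2l; rewrite ?powR_ge0 //;
    apply: ge0_ler_powR; rewrite ?subr_ge0 ?nnegrE //.
rewrite Mq.unlock -[X in _ <= X](powR_Kinv s0 (lt0r_neq0 p0)).
apply: ge0_ler_powR => //; first by rewrite invr_ge0 ltW.
by rewrite nnegrE addr_ge0 ?powR_ge0.
by rewrite nnegrE powR_ge0.
Qed.

Lemma half_convex {X Y q : R} : 0 <= X -> 0 <= Y -> 1 <= q ->
  powR (2^-1 * X + (1 - 2^-1) * Y) q <= 2^-1 * powR X q + (1 - 2^-1) * powR Y q.
Proof.
move=> X0 Y0 q1.
by apply: (convex_powR q1 (Itv01 _ _)) => //=;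
  rewrite ?inE/= ?in_itv/= ?X0 ?Y0 // ?invr_ge0// invf_le1 ?ler1n.
Qed.

Lemma Mq_pm {a b r p} : 0 <= a -> 0 <= b -> 1 <= r -> r <= p ->
  Mq r a b <= powR 2 (r^-1 - p^-1) * Mq p a b.
Proof.
move=> a0 b0 r1 rp.
have r0 : 0 < r by apply: lt_le_trans r1.
have p0 : 0 < p by apply: lt_le_trans rp.
set q := p / r.
have q1 : 1 <= q by rewrite /q ler_pdivlMr // mul1r.
set X := powR a r; set Y := powR b r.
have X0 : 0 <= X by exact: powR_ge0.
have Y0 : 0 <= Y by exact: powR_ge0.
have Xq : powR X q = powR a p by rewrite /X -powRrM /q mulrC divfK // lt0r_neq0.
have Yq : powR Y q = powR b p by rewrite /Y -powRrM /q mulrC divfK // lt0r_neq0.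
have h := half_convex X0 Y0 q1.
have e12 : 1 - 2^-1 = 2^-1 :> R by rewrite {1}(splitr 1) div1r addrK.
rewrite e12 -mulrDr -mulrDr Xq Yq powRM // ?invr_ge0 // ?addr_ge0 // in h.
have h2 : powR (X + Y) q <= powR 2 (q - 1) * (powR a p + powR b p).
  have p2 : 0 < powR (2^-1) q by apply: powR_gt0; rewrite invr_gt0.
  rewrite -(ler_pM2l p2) (le_trans h) // mulrA; apply: ler_wpM2r.
    by rewrite addr_ge0 ?powR_ge0.
  rewrite powRB ?powRr1 //; last by rewrite pnatr_eq0 implybT.
  by rewrite mulrA -powRM ?invr_ge0 // mulVf // powR1 mul1r.
have e1 : r^-1 = q * p^-1 by rewrite /q mulrAC mulfV ?mul1r // lt0r_neq0.
have S0 : 0 <= powR a p + powR b p by rewrite addr_ge0 ?powR_ge0.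
rewrite Mq.unlock -/X -/Y {1}e1 powRrM.
apply: (le_trans (ge0_ler_powR _ _ _ h2)).
- by rewrite invr_ge0 ltW.
- by rewrite nnegrE powR_ge0.
- by rewrite nnegrE mulr_ge0 ?powR_ge0.
rewrite powRM ?powR_ge0 // -powRrM; apply: ler_wpM2r; first exact: powR_ge0.
have -> : (q - 1) * p^-1 = r^-1 - p^-1 by rewrite /q; field; rewrite !lt0r_neq0.
exact: lexx.
Qed.

Lemma Mq1 {a b} : 0 <= a -> 0 <= b -> Mq 1 a b = a + b.
Proof. by move=> a0 b0; rewrite Mq.unlock invr1 !powRr1 // addr_ge0. Qed.

Lemma Mq_gt0 {a b p} : 0 <= a -> 0 <= b -> 0 < a + b -> 0 < p -> 0 < Mq p a b.
Proof.
move=> a0 b0 ab p0; rewrite Mq.unlock; apply: powR_gt0.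
have [a_gt0|] := ltP 0 a.
  by apply: (lt_le_trans (powR_gt0 p a_gt0)); rewrite lerDl powR_ge0.
move=> a_le0; have -> : a = 0 by apply/le_anti; rewrite a_le0 a0.
have b_gt0 : 0 < b by have : a <= 0 := a_le0; lra.
by apply: (lt_le_trans (powR_gt0 p b_gt0)); rewrite lerDr powR_ge0.
Qed.

Lemma inv_le {x y : R} : 0 < x -> x <= y -> y^-1 <= x^-1.
Proof. move=> x0 xy; have y0 := lt_le_trans x0 xy; rewrite lef_pV2 ?posrE //. Qed.

Lemma ratio_le {d a b r p} : 0 <= a -> 0 <= b -> 0 <= d -> d <= a + b ->
  1 <= r -> r <= p ->
  d / Mq r a b <= d / Mq p a b /\ d / Mq p a b <= powR 2 (r^-1 - p^-1) * (d / Mq r a b).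
Proof.
move=> a0 b0 d0 dab r1 rp.
have r0 : 0 < r by apply: lt_le_trans r1.
have p0 : 0 < p by apply: lt_le_trans rp.
have [d_gt0|] := ltP 0 d; last first.
  move=> dle; have -> : d = 0 by apply/le_anti; rewrite dle d0.
  by split; rewrite !mul0r ?mulr0.
have ab0 : 0 < a + b by apply: lt_le_trans dab.
have Mr := Mq_gt0 a0 b0 ab0 r0; have Mp := Mq_gt0 a0 b0 ab0 p0.
split.
  apply: ler_wpM2l; first exact: d0.
  exact: (inv_le Mp (Mq_mono a0 b0 r0 rp)).
rewrite mulrCA; apply: ler_wpM2l; first exact: d0.
rewrite ler_pdivlMr // mulrC ler_pdivrMr //; exact: (Mq_pm a0 b0 r1 rp).
Qed.

Lemma ratio_bound {d a b p} : 0 <= a -> 0 <= b -> 0 <= d -> d <= a + b -> 1 <= p ->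
  d / Mq p a b <= powR 2 (1 - p^-1).
Proof.
move=> a0 b0 d0 dab p1.
have [_ h] := ratio_le a0 b0 d0 dab (lexx 1) p1.
apply: (le_trans h); rewrite invr1 -[X in _ <= X]mulr1; apply: ler_wpM2l.
  exact: powR_ge0.
rewrite Mq1 //; have [ab0|] := ltP 0 (a + b).
  by rewrite ler_pdivrMr // mul1r.
move=> ab; have -> : a + b = 0 by apply/le_anti; rewrite ab addr_ge0.
by rewrite invr0 mulr0.
Qed.

Lemma cauchy_schwarz {n} (u v : 'I_n -> R) :
  \sum_i u i * v i <= Num.sqrt (\sum_i u i ^+ 2) * Num.sqrt (\sum_i v i ^+ 2).
Proof.
set A := \sum_i u i ^+ 2; set B := \sum_i v i ^+ 2; set C := \sum_i u i * v i.
have A0 : 0 <= A by apply: sumr_ge0 => i _; exact: sqr_ge0.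
have B0 : 0 <= B by apply: sumr_ge0 => i _; exact: sqr_ge0.
set a := Num.sqrt A; set b := Num.sqrt B.
have a0 : 0 <= a := sqrtr_ge0 _. have b0 : 0 <= b := sqrtr_ge0 _.
have aA : a ^+ 2 = A by rewrite sqr_sqrtr. have bB : b ^+ 2 = B by rewrite sqr_sqrtr.
have E : \sum_i (b * u i - a * v i) ^+ 2 =
    b ^+ 2 * A - 2 * a * b * C + a ^+ 2 * B.
  rewrite /A /B /C !mulr_sumr -sumrB -big_split /=; apply: eq_bigr => i _; ring.
have H : 0 <= \sum_i (b * u i - a * v i) ^+ 2 by apply: sumr_ge0 => i _; exact: sqr_ge0.
rewrite E aA bB in H.
have [a_gt0|a_le0] := ltP 0 a; last first.
  have a00 : a = 0 by apply/le_anti; rewrite a_le0 a0.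
  have A00 : A = 0 by rewrite -aA a00 expr2 mulr0.
  have ui i : u i = 0.
    by apply/eqP; rewrite -sqrf_eq0; apply/eqP; apply: (psumr_eq0P _ A00) => // j _; exact: sqr_ge0.
  rewrite /C big1 ?a00 ?mul0r // => i _; by rewrite ui mul0r.
have [b_gt0|b_le0] := ltP 0 b; last first.
  have b00 : b = 0 by apply/le_anti; rewrite b_le0 b0.
  have B00 : B = 0 by rewrite -bB b00 expr2 mulr0.
  have vi i : v i = 0.
    by apply/eqP; rewrite -sqrf_eq0; apply/eqP; apply: (psumr_eq0P _ B00) => // j _; exact: sqr_ge0.
  rewrite /C big1 ?b00 ?mulr0 // => i _; by rewrite vi mulr0.
rewrite -aA -bB in H.
have ab0 : 0 < a * b by rewrite mulr_gt0.
nra.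
Qed.

Lemma edist_ge0 n (x y : 'rV[R]_n) : 0 <= edist x y.
Proof. exact: sqrtr_ge0. Qed.

Lemma edist_triangle n (x y z : 'rV[R]_n) : edist x y <= edist x z + edist z y.
Proof.
rewrite /edist.
set u := fun i : 'I_n => x ord0 i - z ord0 i.
set v := fun i : 'I_n => z ord0 i - y ord0 i.
have -> : \sum_(i < n) (x ord0 i - y ord0 i) ^+ 2 =
   \sum_i u i ^+ 2 + 2 * \sum_i u i * v i + \sum_i v i ^+ 2.
  rewrite mulr_sumr -!big_split /=; apply: eq_bigr => i _; rewrite /u /v; ring.
have cs := cauchy_schwarz u v.
have A0 : 0 <= \sum_i u i ^+ 2 by apply: sumr_ge0 => i _; exact: sqr_ge0.
have B0 : 0 <= \sum_i v i ^+ 2 by apply: sumr_ge0 => i _; exact: sqr_ge0.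
have a0 := sqrtr_ge0 (\sum_i u i ^+ 2). have b0 := sqrtr_ge0 (\sum_i v i ^+ 2).
rewrite -[X in _ <= X]ger0_norm ?addr_ge0 // -sqrtr_sqr ler_sqrt ?sqr_ge0 //.
rewrite sqrrD !sqr_sqrtr //.
lra.
Qed.

End PM.


Section P2.
Variable R : realType.

Lemma sup_img_le {T} (B : set T) (F1 F2 : T -> R) :
  (forall z, B z -> F1 z <= F2 z) -> (exists M, forall z, B z -> F2 z <= M) ->
  sup (F1 @` B) <= sup (F2 @` B).
Proof.
move=> h [M hM].
have [->|/set0P[z0 Bz0]] := eqVneq B set0; first by rewrite !image_set0 lexx.
apply: ge_sup; first by exists (F1 z0), z0.
move=> _ [z Bz <-]; apply: (le_trans (h z Bz)).
apply: ub_le_sup; last by exists z.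
by exists M => _ [w Bw <-]; exact: hM.
Qed.

Lemma sup_img_leK {T} (B : set T) (F1 F2 : T -> R) (K : R) : 0 <= K ->
  (forall z, B z -> F2 z <= K * F1 z) -> (exists M, forall z, B z -> F1 z <= M) ->
  sup (F2 @` B) <= K * sup (F1 @` B).
Proof.
move=> K0 h [M hM].
have [->|/set0P[z0 Bz0]] := eqVneq B set0; first by rewrite !image_set0 sup0 mulr0 lexx.
apply: ge_sup; first by exists (F2 z0), z0.
move=> _ [z Bz <-]; apply: (le_trans (h z Bz)); apply: ler_wpM2l => //.
apply: ub_le_sup; last by exists z.
by exists M => _ [w Bw <-]; exact: hM.
Qed.

Definition Fq {n} (z1 z2 : 'rV[R]_n) (q : R) (z : 'rV[R]_n) : R :=
  edist z1 z2 / Mq q (edist z1 z) (edist z z2).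

Lemma bGpE n (G : set 'rV[R]_n) q z1 z2 :
  bGp G q z1 z2 = sup (Fq z1 z2 q @` bdry G).
Proof. by rewrite /bGp /Fq Mq.unlock. Qed.

Lemma sGE n (G : set 'rV[R]_n) z1 z2 : sG G z1 z2 = bGp G 1 z1 z2.
Proof.
rewrite /sG bGpE; congr sup; apply: eq_imagel => z _.
by rewrite /Fq Mq1 // edist_ge0.
Qed.

Lemma Fq_le {n} (z1 z2 : 'rV[R]_n) r p z : 1 <= r -> r <= p ->
  Fq z1 z2 r z <= Fq z1 z2 p z /\ Fq z1 z2 p z <= powR 2 (r^-1 - p^-1) * Fq z1 z2 r z.
Proof.
move=> r1 rp; apply: ratio_le => //; rewrite ?edist_ge0 //; exact: edist_triangle.
Qed.

Lemma Fq_bound {n} (z1 z2 : 'rV[R]_n) p z : 1 <= p -> Fq z1 z2 p z <= powR 2 (1 - p^-1).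
Proof.
move=> p1; apply: ratio_bound => //; rewrite ?edist_ge0 //; exact: edist_triangle.
Qed.

Lemma part1 n (G : set 'rV[R]_n) z1 z2 p r : 1 <= r -> r <= p ->
     bGp G r z1 z2 <= bGp G p z1 z2 /\
     bGp G p z1 z2 <= powR 2 (r^-1 - p^-1) * bGp G r z1 z2.
Proof.
move=> r1 rp; have p1 := le_trans r1 rp; rewrite !bGpE; split.
  apply: sup_img_le => [z _|]; first by case: (@Fq_le n z1 z2 r p z r1 rp).
  by exists (powR 2 (1 - p^-1)) => z _; exact: Fq_bound.
apply: sup_img_leK => [|z _|]; first exact: powR_ge0.
  by case: (@Fq_le n z1 z2 r p z r1 rp).
by exists (powR 2 (1 - r^-1)) => z _; exact: Fq_bound.
Qed.

Lemma part2 n (G : set 'rV[R]_n) z1 z2 p : 1 <= p ->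
     sG G z1 z2 <= bGp G p z1 z2 /\
     bGp G p z1 z2 <= powR 2 (1 - p^-1) * sG G z1 z2.
Proof.
move=> p1; have := @part1 n G z1 z2 p 1 (lexx 1) p1; by rewrite invr1 sGE.
Qed.

End P2.


Section P3.
Variable R : realType.

Lemma ballE {n} (x y : 'rV[R]_n) e :
  ball x e y <-> (0 < e /\ forall i j, `|x i j - y i j| < e).
Proof. by rewrite /ball /= /mx_ball; split => -[e0 h]; split => //. Qed.

Lemma coord_le_edist {n} (x y : 'rV[R]_n) i : `|x ord0 i - y ord0 i| <= edist x y.
Proof.
rewrite /edist -sqrtr_sqr ler_sqrt; last by apply: sumr_ge0 => j _; exact: sqr_ge0.
rewrite (bigD1 i) //= lerDl; apply: sumr_ge0 => j _; exact: sqr_ge0.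
Qed.

Lemma ball_of_edist {n} (x y : 'rV[R]_n) e : edist x y < e -> ball x e y.
Proof.
move=> h; apply/ballE; split; first by apply: le_lt_trans h; exact: edist_ge0.
by move=> i j; rewrite (ord1 i); exact: le_lt_trans (coord_le_edist x y j) h.
Qed.

Lemma open_edist {n} {G : set 'rV[R]_n} {x} : open G -> G x ->
  exists2 e, 0 < e & forall y, edist x y < e -> G y.
Proof.
rewrite openE => oG Gx; have /nbhs_ballP[e e0 sub] := oG x Gx.
by exists e => // y hy; apply: sub; exact: ball_of_edist.
Qed.

Lemma edist_sym {n} (x y : 'rV[R]_n) : edist x y = edist y x.
Proof. by rewrite /edist; congr Num.sqrt; apply: eq_bigr => i _; rewrite -sqrrN opprB. Qed.

Lemma closure_edist {n} (G : set 'rV[R]_n) z :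
  (forall e, 0 < e -> exists2 y, G y & edist z y < e) -> closure G z.
Proof.
move=> h B /nbhs_ballP[e e0 sub]; have [y Gy dy] := h e e0.
by exists y; split => //; apply: sub; exact: ball_of_edist.
Qed.

Lemma edist_seg {n} (x w : 'rV[R]_n) t s :
  edist (x + t *: (w - x)) (x + s *: (w - x)) = `|t - s| * edist x w.
Proof.
rewrite /edist -sqrtr_sqr -sqrtrM ?sqr_ge0 //; congr Num.sqrt.
rewrite mulr_sumr; apply: eq_bigr => i _; rewrite !mxE; ring.
Qed.

Lemma seg0 {n} (x w : 'rV[R]_n) : x + 0 *: (w - x) = x.
Proof. by rewrite scale0r addr0. Qed.

Lemma seg1 {n} (x w : 'rV[R]_n) : x + 1 *: (w - x) = w.
Proof. by rewrite scale1r addrC subrK. Qed.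

Lemma near_bdry {n} (G : set 'rV[R]_n) x w : open G -> G x -> ~ G w ->
  exists t, [/\ 0 <= t, t <= 1 & bdry G (x + t *: (w - x))].
Proof.
move=> oG Gx Gw.
pose T := [set t : R | [/\ 0 <= t, t <= 1 & G (x + t *: (w - x))]].
have T0 : T 0 by split => //; rewrite seg0.
have hT : has_sup T by split; [exists 0 | exists 1 => t [] ].
set ts := sup T.
have ts0 : 0 <= ts by exact: sup_upper_bound hT _ T0.
have ts1 : ts <= 1 by apply: ge_sup; [exists 0 | move=> t []].
set L := edist x w.
have L0 : 0 <= L by exact: edist_ge0.
exists ts; split => //; split; last first.
  have -> : G° = G by apply/interior_id.
  move=> Gz; have [e e0 he] := open_edist oG Gz.
  have [ts_eq1|ts_lt1] := eqVneq ts 1.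
    by apply: Gw; rewrite -(seg1 x w) -ts_eq1.
  have ts_lt : ts < 1 by rewrite lt_neqAle ts_lt1 ts1.
  have den : 0 < L + 1 + e by lra.
  pose q := e / (L + 1 + e).
  have q0 : 0 < q by rewrite divr_gt0.
  have qE : q * (L + 1 + e) = e by rewrite /q divfK // gt_eqF.
  pose t := ts + (1 - ts) * q.
  have Tt : T t.
    have q1 : q < 1 by nra.
    split; [rewrite /t; nra | rewrite /t; nra | apply: he].
    rewrite (edist_seg x w ts t) /t.
    have -> : ts - (ts + (1 - ts) * q) = - ((1 - ts) * q) by ring.
    rewrite normrN ger0_norm; last by nra.
    have qL0 : 0 <= q * L by rewrite mulr_ge0 // ltW.
    have : 0 <= ts * (q * L) by rewrite mulr_ge0.
    have : 0 < q * e by rewrite mulr_gt0.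
    move=> h1 h2; rewrite -/L; nra.
  have := sup_upper_bound hT Tt; rewrite -/ts /t.
  have : 0 < (1 - ts) * q by nra.
  lra.
apply: closure_edist => e e0.
have den : 0 < L + 1 by lra.
have eps0 : 0 < e / (L + 1) by rewrite divr_gt0.
have [t Tt tlt] := sup_adherent eps0 hT.
have tle : t <= ts by exact: sup_upper_bound hT _ Tt.
case: Tt => t0 t1 Gt; exists (x + t *: (w - x)) => //.
rewrite edist_seg ger0_norm ?subr_ge0 //.
have epsE : e / (L + 1) * (L + 1) = e by rewrite divfK // gt_eqF.
rewrite -/ts in tlt.
rewrite -/L; set eps := e / (L + 1) in eps0 epsE tlt *.
have : 0 <= (eps - (ts - t)) * L by rewrite mulr_ge0 // ltW // subr_gt0; lra.
nra.
Qed.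


Lemma sq_inj (X Y : R) : 0 <= X -> 0 <= Y -> X ^+ 2 = Y ^+ 2 -> X = Y.
Proof. by move=> X0 Y0 h; apply/eqP; rewrite -(@eqrXn2 _ 2) //; apply/eqP. Qed.

Definition i1 : 'I_2 := lift ord0 (ord0 : 'I_1).

Lemma edist2 (y z : 'rV[R]_2) :
  edist y z = Num.sqrt ((y ord0 ord0 - z ord0 ord0) ^+ 2 + (y ord0 i1 - z ord0 i1) ^+ 2).
Proof. by rewrite /edist big_ord_recl big_ord1. Qed.

Lemma poly1 (k : R) : 0 < k -> k <= 4^-1 ->
  ((1 - 2 * k ^+ 2) ^+ 2 + k ^+ 2) * (1 + k ^+ 2) ^+ 2 < 1.
Proof.
move=> k0 k4; set K := k ^+ 2.
have K0 : 0 < K by rewrite exprn_gt0.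
have K16 : K <= 16^-1.
  have : k * k <= 4^-1 * 4^-1 by apply: ler_pM => //; exact: ltW.
  by rewrite /K expr2; lra.
have -> : ((1 - 2 * K) ^+ 2 + K) * (1 + K) ^+ 2 = 1 - K * (1 + K - 5 * K ^+ 2 - 4 * K ^+ 3).
  by ring.
have : 0 < 1 + K - 5 * K ^+ 2 - 4 * K ^+ 3.
  have h2 : K ^+ 2 <= 16^-1 * K by rewrite expr2; apply: ler_wpM2r; [exact: ltW|].
  have h3 : K ^+ 3 <= 16^-1 * K ^+ 2.
    by rewrite exprS; apply: ler_wpM2r => //; rewrite exprn_ge0 // ltW.
  lra.
move=> h; have : 0 < K * (1 + K - 5 * K ^+ 2 - 4 * K ^+ 3) by rewrite mulr_gt0.
lra.
Qed.


Lemma config (G : set 'rV[R]_2) (k : R) : G !=set0 -> open G -> G != setT ->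
  0 < k -> k <= 4^-1 ->
  exists z1 z2 z0 D, [/\ G z1, G z2, bdry G z0, 0 < D &
     [/\ edist z1 z2 = 2 * k * D,
         edist z1 z0 = Num.sqrt (k ^+ 2 * (1 + 4 * k ^+ 2)) * D &
         edist z0 z2 = Num.sqrt (k ^+ 2 * (1 + 4 * k ^+ 2)) * D]].
Proof.
move=> [x Gx] oG GT k0 k4.
have [w Gw] : exists w, ~ G w.
  apply: contrapT => hn; move/eqP: GT; apply; apply/seteqP; split => // y _.
  by apply: contrapT => Gy; apply: hn; exists y.
pose C := [set edist x y | y in ~` G].
have C0 : C !=set0 by exists (edist x w), w.
have hC : has_inf C by split => //; exists 0 => _ [y _ <-]; exact: edist_ge0.
set d0 := inf C.
have d0le y : ~ G y -> d0 <= edist x y by move=> Gy; apply: (ge_inf hC.2); exists y.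
have [e e0 he] := open_edist oG Gx.
have d0_pos : 0 < d0.
  apply: lt_le_trans e0 _; apply: lb_le_inf => // _ [y Gy <-].
  by rewrite leNgt; apply/negP => /he; exact: Gy.
have eps0 : 0 < d0 * k ^+ 2 by rewrite mulr_gt0 // exprn_gt0.
have [_ [w' Gw' <-] hw'] := inf_adherent eps0 hC.
have [t [t0 t1 bz]] := near_bdry G x w' oG Gx Gw'.
set z0 := x + t *: (w' - x) in bz.
have intG : G° = G by apply/interior_id.
have Gz0 : ~ G z0 by move: bz => [_]; rewrite intG.
set D := edist x z0.
have L0 : 0 <= edist x w' by exact: edist_ge0.
have DE : D = t * edist x w'.
  by have := edist_seg x w' 0 t; rewrite seg0 sub0r normrN ger0_norm.
have D_ge : d0 <= D := d0le _ Gz0.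
have D_lt : D < d0 * (1 + k ^+ 2).
  rewrite DE -/d0 in hw' *.
  have : 0 <= (1 - t) * edist x w' by rewrite mulr_ge0 // subr_ge0.
  nra.
have D0 : 0 < D by apply: lt_le_trans D_ge.
set v := z0 - x.
have z0E : z0 = x + v by rewrite /v addrC subrK.
clearbody v.
set a0 := v ord0 ord0; set a1 := v ord0 i1.
have DD : D ^+ 2 = a0 ^+ 2 + a1 ^+ 2.
  rewrite /D z0E edist2 sqr_sqrtr ?addr_ge0 ?sqr_ge0 // !mxE -/a0 -/a1; ring.
pose al := 1 - 2 * k ^+ 2.
pose vp : 'rV[R]_2 := \row_(j < 2) (if j == ord0 then - a1 else a0).
have vp0 : vp ord0 ord0 = - a1 by rewrite mxE eqxx.
have vp1 : vp ord0 i1 = a0 by rewrite mxE.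
clearbody vp.
pose z1 := x + al *: v + k *: vp.
pose z2 := x + al *: v - k *: vp.
have E1 : edist x z1 ^+ 2 = (al ^+ 2 + k ^+ 2) * D ^+ 2.
  rewrite edist2 sqr_sqrtr ?addr_ge0 ?sqr_ge0 // !mxE vp0 vp1 DD -/a0 -/a1; ring.
have E2 : edist z1 z0 ^+ 2 = (k ^+ 2 * (1 + 4 * k ^+ 2)) * D ^+ 2.
  rewrite z0E edist2 sqr_sqrtr ?addr_ge0 ?sqr_ge0 // !mxE vp0 vp1 DD -/a0 -/a1 /al; ring.
have E3 : edist z0 z2 ^+ 2 = (k ^+ 2 * (1 + 4 * k ^+ 2)) * D ^+ 2.
  rewrite z0E edist2 sqr_sqrtr ?addr_ge0 ?sqr_ge0 // !mxE vp0 vp1 DD -/a0 -/a1 /al; ring.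
have E4 : edist z1 z2 ^+ 2 = (2 * k) ^+ 2 * D ^+ 2.
  rewrite edist2 sqr_sqrtr ?addr_ge0 ?sqr_ge0 // !mxE vp0 vp1 DD -/a0 -/a1; ring.
have c20 : 0 <= k ^+ 2 * (1 + 4 * k ^+ 2) by rewrite mulr_ge0 ?sqr_ge0 // addr_ge0 // mulr_ge0 // sqr_ge0.
have inG (z : 'rV[R]_2) : edist x z ^+ 2 = (al ^+ 2 + k ^+ 2) * D ^+ 2 -> G z.
  move=> Ez; apply: contrapT => Gz; have := d0le _ Gz.
  have P1 := @poly1 k k0 k4; rewrite -/al in P1.
  have P0 : 0 <= al ^+ 2 + k ^+ 2 by rewrite addr_ge0 ?sqr_ge0.
  have hD2 : D ^+ 2 < (d0 * (1 + k ^+ 2)) ^+ 2.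
    by rewrite !expr2; nra.
  move=> hd; have : d0 ^+ 2 <= edist x z ^+ 2 by rewrite !expr2; nra.
  rewrite Ez => h2.
  have : (al ^+ 2 + k ^+ 2) * D ^+ 2 <= (al ^+ 2 + k ^+ 2) * (d0 * (1 + k ^+ 2)) ^+ 2.
    by apply: ler_wpM2l => //; exact: ltW.
  have -> : (al ^+ 2 + k ^+ 2) * (d0 * (1 + k ^+ 2)) ^+ 2 =
     ((al ^+ 2 + k ^+ 2) * (1 + k ^+ 2) ^+ 2) * d0 ^+ 2 by ring.
  move: P1; set Q := (al ^+ 2 + k ^+ 2) * (1 + k ^+ 2) ^+ 2 => P1 h3.
  have d2 : 0 < d0 ^+ 2 by rewrite exprn_gt0.
  have : 0 < (1 - Q) * d0 ^+ 2 by rewrite mulr_gt0 // subr_gt0.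
  move: h2 h3; set Y := (al ^+ 2 + k ^+ 2) * D ^+ 2; set d2' := d0 ^+ 2.
  move=> h2 h3 h4; have : d2' <= Q * d2' by apply: le_trans h2 h3.
  lra.
exists z1, z2, z0, D; split => //.
- by apply: inG.
- apply: inG; rewrite edist2 sqr_sqrtr ?addr_ge0 ?sqr_ge0 // !mxE vp0 vp1 DD -/a0 -/a1; ring.
split.
- apply: sq_inj; [exact: edist_ge0 | by rewrite !mulr_ge0 // ltW | by rewrite E4 -exprMn].
- apply: sq_inj; [exact: edist_ge0 | by rewrite mulr_ge0 ?sqrtr_ge0 // ltW |].
  by rewrite E2 exprMn (sqr_sqrtr c20).
- apply: sq_inj; [exact: edist_ge0 | by rewrite mulr_ge0 ?sqrtr_ge0 // ltW |].
  by rewrite E3 exprMn (sqr_sqrtr c20).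
Qed.

End P3.


Section P4.
Variable R : realType.

Lemma sq_le (X Y : R) : 0 <= X -> 0 <= Y -> X ^+ 2 <= Y ^+ 2 -> X <= Y.
Proof.
move=> X0 Y0 h; rewrite leNgt; apply/negP => lt.
have : Y ^+ 2 < X ^+ 2 by rewrite !expr2; nra.
lra.
Qed.

Lemma Mq_same (s p : R) : 0 <= s -> 0 < p -> Mq p s s = powR 2 p^-1 * s.
Proof.
move=> s0 p0; rewrite Mq.unlock.
have -> : powR s p + powR s p = 2 * powR s p by ring.
by rewrite powRM ?powR_ge0 // powR_Kinv // lt0r_neq0.
Qed.

Lemma c_eq (p : R) : powR 2 (1 - p^-1) = 2 / powR 2 p^-1.
Proof.
rewrite powRB ?powRr1 //; last by rewrite pnatr_eq0 implybT.
Qed.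

Lemma bGp_le_c {n} (G : set 'rV[R]_n) p z1 z2 : 1 <= p ->
  bGp G p z1 z2 <= powR 2 (1 - p^-1).
Proof.
move=> p1; rewrite bGpE.
have [->|/set0P[z0 Bz0]] := eqVneq (bdry G) set0.
  by rewrite image_set0 sup0 powR_ge0.
apply: ge_sup; first by exists (Fq R z1 z2 p z0), z0.
by move=> _ [z _ <-]; exact: Fq_bound.
Qed.

Lemma part3 (G : set 'rV[R]_2) p : proper_domain G -> 1 <= p ->
  sup [set bGp G p z1 z2 | z1 in G & z2 in G] = powR 2 (1 - p^-1).
Proof.
move=> [G0 oG cG GT] p1.
have p0 : 0 < p by apply: lt_le_trans p1.
set S := [set bGp G p z1 z2 | z1 in G & z2 in G].
set c := powR 2 (1 - p^-1).
have c0 : 0 < c by apply: powR_gt0.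
have S0 : S !=set0 by case: G0 => x Gx; exists (bGp G p x x), x => //; exists x.
have ubS : ubound S c by move=> _ [z1 _ [z2 _ <-]]; exact: bGp_le_c.
have hS : has_sup S by split => //; exists c.
apply/le_anti/andP; split; first exact: ge_sup.
apply/ler_addgt0Pr => eps eps0.
have ec0 : 0 < eps + c by lra.
set r := eps / (eps + c).
have r0 : 0 < r by rewrite divr_gt0.
have rE : r * (eps + c) = eps by rewrite /r divfK // gt_eqF.
have r1 : r <= 1 by nra.
set k := 4^-1 * r.
have k0 : 0 < k by rewrite mulr_gt0 // invr_gt0.
have k4 : k <= 4^-1 by rewrite /k; lra.
have [z1 [z2 [z0 [D [Gz1 Gz2 bz0 D0 [d12 d10 d02]]]]]] := @config R G k G0 oG GT k0 k4.
set Q := Num.sqrt (k ^+ 2 * (1 + 4 * k ^+ 2)) in d10 d02.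
have c20 : 0 < k ^+ 2 * (1 + 4 * k ^+ 2).
  by rewrite mulr_gt0 ?exprn_gt0 // ltr_wpDr // mulr_ge0 // sqr_ge0.
have Q0 : 0 < Q by rewrite sqrtr_gt0.
set P := powR 2 p^-1.
have P0 : 0 < P by apply: powR_gt0.
have Fq_val : Fq R z1 z2 p z0 = 2 * k / (P * Q).
  rewrite /Fq d12 d10 d02 Mq_same ?mulr_ge0 ?ltW // -/P.
  by field; rewrite !gt_eqF.
have hQ : (1 - 2 * k ^+ 2) * Q <= k.
  have kk : k ^+ 2 <= 16^-1 by rewrite expr2; nra.
  apply: sq_le; [by rewrite mulr_ge0 ?ltW //; lra | exact: ltW |].
  rewrite exprMn (sqr_sqrtr (ltW c20)).
  have -> : (1 - 2 * k ^+ 2) ^+ 2 * (k ^+ 2 * (1 + 4 * k ^+ 2)) =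
    k ^+ 2 * (1 - 12 * (k ^+ 2) ^+ 2 + 16 * (k ^+ 2) ^+ 3) by ring.
  set K := k ^+ 2 in kk *.
  have K0 : 0 <= K by exact: sqr_ge0.
  have : 16 * K ^+ 3 <= 12 * K ^+ 2.
    rewrite exprS; have : 0 <= K ^+ 2 by exact: sqr_ge0.
    nra.
  move=> h; have : 0 <= K * (12 * K ^+ 2 - 16 * K ^+ 3) by rewrite mulr_ge0 // subr_ge0.
  nra.
have hF : c * (1 - 2 * k ^+ 2) <= Fq R z1 z2 p z0.
  rewrite Fq_val ler_pdivlMr ?mulr_gt0 // /c c_eq -/P.
  have -> : 2 / P * (1 - 2 * k ^+ 2) * (P * Q) = 2 * ((1 - 2 * k ^+ 2) * Q).
    by field; rewrite gt_eqF.
  lra.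
have hB : Fq R z1 z2 p z0 <= bGp G p z1 z2.
  rewrite bGpE; apply: ub_le_sup; last by exists z0.
  by exists c => _ [z _ <-]; exact: Fq_bound.
have hS' : bGp G p z1 z2 <= sup S.
  apply: ub_le_sup; first by exists c.
  by exists z1 => //; exists z2.
have hk : 2 * c * k ^+ 2 <= eps.
  have crle : c * r <= eps by nra.
  rewrite /k; nra.
nra.
Qed.

End P4.

Theorem theorem3p6 (R : realType) (n : nat) (G : set 'rV[R]_n) :
  proper_domain G ->
  (forall (z1 z2 : 'rV[R]_n) (p r : R), G z1 -> G z2 -> 1 <= r -> r < p ->
     bGp G r z1 z2 <= bGp G p z1 z2 /\
     bGp G p z1 z2 <= powR 2 (r^-1 - p^-1) * bGp G r z1 z2) /\
  (forall (z1 z2 : 'rV[R]_n) (p : R), G z1 -> G z2 -> 1 <= p ->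
     sG G z1 z2 <= bGp G p z1 z2 /\
     bGp G p z1 z2 <= powR 2 (1 - p^-1) * sG G z1 z2) /\
  (n = 2%N -> forall p : R, 1 <= p ->
     sup [set bGp G p z1 z2 | z1 in G & z2 in G] = powR 2 (1 - p^-1)).
Proof.
move=> PG; split; [|split].
- move=> z1 z2 p r _ _ r1 rp; apply: part1 => //; exact: ltW.
- by move=> z1 z2 p _ _ p1; apply: part2.
- by move=> n2; subst n => p p1; apply: part3.
Qed.
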